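(* Let $n$ be a positive integer and let $D_n=\langle x,y\mid x^n=e,\ y^2=e,\ (xy)^2=e\rangle$ be the dihedral group with generating set $\Delta=\{x,y\}$. Then $W=W_xU_x+W_yU_y$ is a homogeneous scalar quantum walk on $C_\Delta(D_n)$ if and only if, up to a global phase, $W_x=\cos\phi$ and $W_y=i\sin\phi$ for some real $\phi$ (with both values nonzero). In particular such a walk exists; for $n=2$ this gives a homogeneous scalar quantum walk on the hypercube of dimension 2.
   Context: The Cayley graph $C_\Delta(\Gamma)$ has vertex set $\Gamma$ and directed edges $(g,g\delta)$, $g\in\Gamma,\delta\in\Delta$. Let $\ell^2(\Gamma)$ have orthonormal basis $\{|g\rangle\}_{g\in\Gamma}$ and for $\delta\in\Gamma$ let $U_\delta|g\rangle=|g\delta\rangle$. A homogeneous scalar quantum walk on $C_\Delta(\Gamma)$ is a unitary operator $W=\sum_{\delta\in\Delta}W_\delta U_\delta$ with all complex coefficients $W_\delta$ nonzero. ''Up to a global phase'' means that all coefficients may be multiplied by a common complex number of modulus one. *)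

(* Defs.v *)
From HB Require Import structures.
From mathcomp Require Import all_boot all_order all_algebra.
From mathcomp Require Import complex.
From mathcomp Require Import reals trigo.
Set Implicit Arguments. Unset Strict Implicit. Unset Printing Implicit Defensive.
Import Order.TTheory GRing.Theory Num.Theory.
Local Open Scope ring_scope.

(* The dihedral group D_n, n = m.+1 >= 1, as the concrete model           *)
(*   { x^k y^b | k in Z/nZ, b in {0,1} },  encoded as the pair (k, b).     *)
(* Multiplication: x^k y^b * x^l y^c = x^(k + (-1)^b l) y^(b xor c),      *)
(* which is the group < x, y | x^n = e, y^2 = e, (xy)^2 = e >.            *)
Definition dihedral (m : nat) : Type := ('I_m.+1 * bool)%type.
HB.instance Definition _ (m : nat) := Finite.copy (dihedral m) ('I_m.+1 * bool)%type.

Definition dmul (m : nat) (g h : dihedral m) : dihedral m :=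
  (((g.1 : 'I_m.+1) + (if g.2 then - h.1 else h.1))%R, addb g.2 h.2).

Definition dunit (m : nat) : dihedral m := ((0%R : 'I_m.+1), false).
Definition dx (m : nat) : dihedral m := ((inZp 1 : 'I_m.+1), false).
Definition dy (m : nat) : dihedral m := ((0%R : 'I_m.+1), true).

(* Operators on l^2(T) for a finite type T, given by their matrix entries *)
(* A h g = <h| A |g>, with complex coefficients in R[i].                  *)
Definition op (R : rcfType) (T : finType) := T -> T -> R[i].

Definition shift (R : rcfType) (T : finType) (mul : T -> T -> T) (d : T)
  : op R T := fun h g => ((h == mul g d)%:R : R[i]).

Definition op_comp (R : rcfType) (T : finType) (A B : op R T) : op R T :=
  fun h g => \sum_k A h k * B k g.

Definition op_adj (R : rcfType) (T : finType) (A : op R T) : op R T :=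
  fun h g => conjc (A g h).

Definition op_id (R : rcfType) (T : finType) : op R T :=
  fun h g => ((h == g)%:R : R[i]).

Definition unitary (R : rcfType) (T : finType) (A : op R T) : Prop :=
  (forall h g, op_comp A (op_adj A) h g = @op_id R T h g) /\
  (forall h g, op_comp (op_adj A) A h g = @op_id R T h g).

Definition dihedral_walk (R : rcfType) (m : nat) (Wx Wy : R[i]) : op R (dihedral m) :=
  fun h g => Wx * shift R (@dmul m) (dx m) h g + Wy * shift R (@dmul m) (dy m) h g.

Definition is_hsqw_dihedral (R : rcfType) (m : nat) (Wx Wy : R[i]) : Prop :=
  Wx != 0 /\ Wy != 0 /\ unitary (@dihedral_walk R m Wx Wy).

(* Main.v *)
Require Import Defs.
From HB Require Import structures.
From mathcomp Require Import all_boot all_order all_algebra.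
From mathcomp Require Import complex.
From mathcomp Require Import reals trigo.
From mathcomp Require Import ring lra.
Import Order.TTheory GRing.Theory Num.Theory.
Local Open Scope ring_scope.

Section G.
Variable m : nat.
Local Notation D := (dihedral m).
Local Notation mul := (@dmul m).
Definition dinv (g : D) : D := ((if g.2 then g.1 else - g.1), g.2).

Lemma dmulA (g h k : D) : mul (mul g h) k = mul g (mul h k).
Proof.
case: g h k => [g1 [|]] [h1 [|]] [k1 [|]]; rewrite /dmul /=; congr (_, _);
  by rewrite ?opprD ?opprK addrA.
Qed.

Lemma dmulV (g : D) : mul g (dinv g) = dunit m.
Proof. by case: g => [g1 [|]]; rewrite /dmul /dinv /dunit /= ?subrr ?addbb. Qed.

Lemma dmulVl (g : D) : mul (dinv g) g = dunit m.
Proof. by case: g => [g1 [|]]; rewrite /dmul /dinv /dunit /= ?subrr ?addNr ?addbb. Qed.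

Lemma dmul1 (g : D) : mul g (dunit m) = g.
Proof. by case: g => [g1 [|]]; rewrite /dmul /dunit /= ?oppr0 addr0 ?addbF. Qed.

Lemma dmul1l (g : D) : mul (dunit m) g = g.
Proof. by case: g => [g1 b]; rewrite /dmul /dunit /= add0r. Qed.

Lemma eq_mulr (h k d : D) : (h == mul k d) = (k == mul h (dinv d)).
Proof.
apply/eqP/eqP => ->; first by rewrite dmulA dmulV dmul1.
by rewrite dmulA dmulVl dmul1.
Qed.

Lemma mul_inj (h k d : D) : (mul h d == mul k d) = (h == k).
Proof. by rewrite eq_mulr dmulA dmulV dmul1. Qed.

Lemma neq_refl (h z : D) : z.2 = true -> (h == mul h z) = false.
Proof.
move=> hz; apply/negbTE; case: h => h1 b; rewrite /dmul /= hz.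
by apply/negP => /eqP [] _; case: b.
Qed.

Lemma xy1 : mul (dinv (dx m)) (dy m) = mul (dinv (dy m)) (dx m).
Proof. by rewrite /dmul /dinv /= ?oppr0 ?addr0 ?add0r. Qed.

Lemma xy2 : mul (dx m) (dinv (dy m)) = mul (dy m) (dinv (dx m)).
Proof. by rewrite /dmul /dinv /= ?oppr0 ?opprK ?addr0 ?add0r. Qed.
Variable R : rcfType.
Local Notation ind b := ((b)%:R : R[i]).

Lemma sum_pick (p : D) (F : D -> R[i]) : \sum_k ind (k == p) * F k = F p.
Proof.
rewrite (bigD1 p) //= eqxx mul1r big1 ?addr0 // => k /negbTE ->; by rewrite mul0r.
Qed.

Lemma sum_ind (h g d d' : D) :
  \sum_k ind (h == mul k d) * ind (g == mul k d') = ind (g == mul h (mul (dinv d) d')).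
Proof.
under eq_bigr => k _ do rewrite eq_mulr.
by rewrite sum_pick dmulA.
Qed.

Lemma sum_ind2 (p q : D) :
  \sum_k ind (k == p) * ind (k == q) = ind (p == q).
Proof. by rewrite sum_pick. Qed.

Lemma conj_ind (b : bool) : ((ind b)^*)%C = ind b.
Proof. by rewrite conjc_nat. Qed.

Lemma sum4 (c c' : R[i]) (h g d d' : D) :
  \sum_k (c * ind (h == mul k d)) * (c' * ind (g == mul k d')) =
  c * c' * ind (g == mul h (mul (dinv d) d')).
Proof. under eq_bigr => k _ do rewrite mulrACA. by rewrite -mulr_sumr sum_ind. Qed.

Lemma WW (a b : R[i]) (h g : D) :
  op_comp (@dihedral_walk R m a b) (op_adj (@dihedral_walk R m a b)) h g =
  (a * a^*%C + b * b^*%C) * ind (h == g)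
  + a * b^*%C * ind (g == mul h (mul (dinv (dx m)) (dy m)))
  + b * a^*%C * ind (g == mul h (mul (dinv (dx m)) (dy m))).
Proof.
rewrite /op_comp /op_adj /dihedral_walk /shift.
under eq_bigr => k _ do rewrite rmorphD !rmorphM /= !conj_ind mulrDl !mulrDr.
rewrite !big_split /= !sum4 !dmulVl !dmul1 -xy1 (eq_sym g h).
ring.
Qed.
Lemma sum4' (c c' : R[i]) (p q : D) :
  \sum_k (c * ind (k == p)) * (c' * ind (k == q)) = c * c' * ind (p == q).
Proof. under eq_bigr => k _ do rewrite mulrACA. by rewrite -mulr_sumr sum_ind2. Qed.

Lemma WsW (a b : R[i]) (h g : D) :
  op_comp (op_adj (@dihedral_walk R m a b)) (@dihedral_walk R m a b) h g =
  (a * a^*%C + b * b^*%C) * ind (h == g)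
  + a^*%C * b * ind (g == mul h (mul (dx m) (dinv (dy m))))
  + b^*%C * a * ind (g == mul h (mul (dx m) (dinv (dy m)))).
Proof.
rewrite /op_comp /op_adj /dihedral_walk /shift.
under eq_bigr => k _ do rewrite rmorphD !rmorphM /= !conj_ind mulrDl !mulrDr.
rewrite !big_split /= !sum4' !mul_inj (eq_mulr (mul h (dx m))) (eq_mulr (mul h (dy m))) !dmulA -xy2.

ring.
Qed.
End G.

Lemma cplx_bwd (R : realType) (a b c : R[i]) (phi : R) :
  `|c| = 1 -> a = c * ((cos phi)%:C)%C -> b = c * (('i)%C * ((sin phi)%:C)%C) ->
  a * a^*%C + b * b^*%C = 1 /\ a * b^*%C + b * a^*%C = 0.
Proof.
move=> hc -> ->.
have : (((complex.Re c)^+2 + (complex.Im c)^+2)%:C)%C = 1 :> R[i] by rewrite add_Re2_Im2 hc expr1n.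
case: c {hc} => c1 c2 /= [] hc.
have hcs := cos2Dsin2 phi.
split; simpc; congr (Complex _ _); nra.
Qed.

Lemma angle (R : realType) (p q : R) : p ^+ 2 + q ^+ 2 = 1 ->
  exists phi : R, cos phi = p /\ sin phi = q.
Proof.
move=> h.
have hp : -1 <= p <= 1.
  have : p ^+ 2 <= 1 by rewrite -h lerDl sqr_ge0.
  by move=> H; apply/andP; split; nra.
have hs : Num.sqrt (1 - p ^+ 2) = `|q|.
  by rewrite -h addrC addKr sqrtr_sqr.
case: (leP 0 q) => hq.
  exists (acos p); split; first by rewrite acosK // in_itv.
  by rewrite sin_acos // hs ger0_norm.
exists (- acos p); split; first by rewrite cosN acosK // in_itv.
by rewrite sinN sin_acos // hs ltr0_norm ?opprK.
Qed.

Lemma cplx_fwd (R : realType) (a b : R[i]) : a != 0 ->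
  a * a^*%C + b * b^*%C = 1 -> a * b^*%C + b * a^*%C = 0 ->
  exists (c : R[i]) (phi : R),
    `|c| = 1 /\ a = c * ((cos phi)%:C)%C /\ b = c * (('i)%C * ((sin phi)%:C)%C).
Proof.
case: a => a1 a2; case: b => b1 b2 ha.
simpc => -[h1 _] [h2 _].
have e : a1 * b1 + a2 * b2 = 0.
  have : 2 * (a1 * b1 + a2 * b2) = 0 by rewrite -h2; ring.
  by move/eqP; rewrite mulf_eq0 pnatr_eq0 /= => /eqP.
set r2 := a1 ^+ 2 + a2 ^+ 2.
have r2pos : 0 < r2.
  rewrite lt_neqAle addr_ge0 ?sqr_ge0 // andbT; apply/eqP => h0.
  move/esym/eqP: h0; rewrite /r2 paddr_eq0 ?sqr_ge0 // !sqrf_eq0 => /andP[/eqP e1 /eqP e2].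
  by move: ha; rewrite e1 e2 eqxx.
set r := Num.sqrt r2.
have rpos : 0 < r by rewrite sqrtr_gt0.
have rr : r ^+ 2 = r2 by rewrite sqr_sqrtr // ltW.
have rn0 : r != 0 by rewrite gt_eqF.
set s := (a1 * b2 - a2 * b1) / r.
have hps : r ^+ 2 + s ^+ 2 = 1.
  rewrite /s expr_div_n rr.
  have -> : (a1 * b2 - a2 * b1) ^+ 2 = r2 * (b1 ^+ 2 + b2 ^+ 2) - (a1 * b1 + a2 * b2) ^+ 2 by rewrite /r2; ring.
  rewrite e.
  rewrite expr0n /= subr0.
rewrite mulrAC divff ?mul1r ?gt_eqF //.
  have r2n0 : r2 != 0 by rewrite gt_eqF.
  have k1 : b1 * r2 = - (a2 * (a1 * b2 - a2 * b1)).
    have -> : b1 * r2 = - (a2 * (a1 * b2 - a2 * b1)) + a1 * (a1 * b1 + a2 * b2) by rewrite /r2; ring.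
    by rewrite e mulr0 addr0.
  have k2 : b2 * r2 = a1 * (a1 * b2 - a2 * b1).
    have -> : b2 * r2 = a1 * (a1 * b2 - a2 * b1) + a2 * (a1 * b1 + a2 * b2) by rewrite /r2; ring.
    by rewrite e mulr0 addr0.
have [phi [hc hs]] := @angle R _ _ hps.
exists (Complex (a1 / r) (a2 / r)), phi; rewrite hc hs.
split; last split.
- rewrite normc_def /=.
  have -> : (a1 / r) ^+ 2 + (a2 / r) ^+ 2 = 1.
    by rewrite !expr_div_n -mulrDl rr divff // gt_eqF.
  by rewrite sqrtr1.
- simpc; congr (Complex _ _); by rewrite divfK.
- simpc; congr (Complex _ _); rewrite /s.
  + have -> : - (a2 / r * ((a1 * b2 - a2 * b1) / r)) = - (a2 * (a1 * b2 - a2 * b1)) / r ^+ 2.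
      by field.
    by rewrite rr -k1 mulfK.
  + have -> : a1 / r * ((a1 * b2 - a2 * b1) / r) = a1 * (a1 * b2 - a2 * b1) / r ^+ 2.
      by field.
    by rewrite rr -k2 mulfK.
Qed.


Lemma unit_fwd (R : rcfType) (m : nat) (a b : R[i]) :
  unitary (@dihedral_walk R m a b) ->
  a * a^*%C + b * b^*%C = 1 /\ a * b^*%C + b * a^*%C = 0.
Proof.
case=> hl _.
have hz : (dmul (dinv m (dx m)) (dy m)).2 = true by [].
split.
  have := hl (dunit m) (dunit m).
  by rewrite WW /op_id eqxx !neq_refl //= !mulr0 !addr0 mulr1.
have := hl (dunit m) (dmul (dunit m) (dmul (dinv m (dx m)) (dy m))).
rewrite WW /op_id eqxx neq_refl //= mulr0 add0r !mulr1; exact: id.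
Qed.

Lemma unit_bwd (R : rcfType) (m : nat) (a b : R[i]) :
  a * a^*%C + b * b^*%C = 1 -> a * b^*%C + b * a^*%C = 0 ->
  unitary (@dihedral_walk R m a b).
Proof.
move=> h1 h2.
have hz : (dmul (dinv m (dx m)) (dy m)).2 = true by [].
have hz' : (dmul (dx m) (dinv m (dy m))).2 = true by [].
have h3 : a^*%C * b + b^*%C * a = 0 by rewrite -h2; ring.
split => h g; rewrite ?WW ?WsW /op_id; case: (eqVneq h g) => [<-|hne].
- by rewrite ?eqxx neq_refl //= h1 !mulr0 !addr0 mulr1.
- by rewrite ?(negbTE hne) /= mulr0 add0r -mulrDl h2 mul0r.
- by rewrite ?eqxx /= (@neq_refl m h _ hz') h1 !mulr0 !addr0 mulr1.
- by rewrite ?(negbTE hne) /= mulr0 add0r -mulrDl h3 mul0r.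
Qed.

(* n = m.+1 *)
Theorem mainTheorem3 (R : realType) (m : nat) :
  (forall Wx Wy : R[i],
      is_hsqw_dihedral m Wx Wy <->
      (Wx != 0 /\ Wy != 0 /\
       exists (c : R[i]) (phi : R),
         `|c| = 1 /\ Wx = c * ((cos phi)%:C)%C /\ Wy = c * (('i)%C * ((sin phi)%:C)%C))) /\
  (exists Wx Wy : R[i], is_hsqw_dihedral m Wx Wy).
Proof.
split.
  move=> Wx Wy; rewrite /is_hsqw_dihedral; split.
    case=> ha [hb hu]; have [h1 h2] := @unit_fwd _ _ _ _ hu.
    by split; [|split]; [| |exact: cplx_fwd].
  case=> ha [hb [c [phi [hc [ex ey]]]]].
  have [h1 h2] := @cplx_bwd _ _ _ _ _ hc ex ey.
  by split; [|split]; [| |exact: unit_bwd].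
exists (Complex (3/5) 0), (Complex 0 (4/5)).
split; [|split].
- by apply/eqP => -[]; lra.
- by apply/eqP => -[]; lra.
apply: unit_bwd; simpc; congr (Complex _ _); lra.
Qed.
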